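(* Let $v$ and $v'$ be distinct true twin vertices of a graph $G$ and $S$ a DNS of $G$. Then: (1) for every $x\in\widehat S$ and $i\in\{1,2\}$, if $v'\in N_S^i[x]$ then $v\in N_S^i[x]$; (2) if $v,v'\in\widehat S$, then there exists a DNS $S'$ of $G$ with $\widehat{S'}=\widehat S$ in which $v$ and $v'$ appear consecutively.
   Context: Graphs are finite, simple, undirected; $N[v]$ closed neighborhood; $v,v'$ are true twins if $N[v]=N[v']$. A sequence $S=(v_1,\dots,v_k)$ of distinct vertices is a double neighborhood sequence (DNS) if for each $i$ some $w\in N[v_i]$ satisfies $|\{j<i:w\in N[v_j]\}|\le1$. $\widehat S$ is its vertex set. $N_S^1[v_i]=N[v_i]\setminus\bigcup_{j<i}N[v_j]$ and $N_S^2[v_i]=\{w\in N[v_i]:|\{j<i:w\in N[v_j]\}|=1\}$. *)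

(* Defs.v *)
From mathcomp Require Import all_boot.
Set Implicit Arguments. Unset Strict Implicit. Unset Printing Implicit Defensive.

(* A finite simple undirected graph is a relation e on a finType T that is
   symmetric and irreflexive (assumed as hypotheses in the theorem). *)

Definition cnbh (T : finType) (e : rel T) (v : T) : {set T} :=
  [set w | (w == v) || e v w].

Definition cover_count (T : finType) (e : rel T) (p : seq T) (w : T) : nat :=
  count (fun u => w \in cnbh e u) p.

Definition is_DNS (T : finType) (e : rel T) (S : seq T) : Prop :=
  uniq S /\
  forall (p q : seq T) (x : T), S = p ++ x :: q ->
    exists w, w \in cnbh e x /\ cover_count e p w <= 1.

Definition NS1 (T : finType) (e : rel T) (S : seq T) (x : T) : {set T} :=
  [set w in cnbh e x | cover_count e (take (index x S) S) w == 0].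

Definition NS2 (T : finType) (e : rel T) (S : seq T) (x : T) : {set T} :=
  [set w in cnbh e x | cover_count e (take (index x S) S) w == 1].

(* Main.v *)
Require Import Defs.
From mathcomp Require Import all_boot.
From mathcomp Require Import zify.

Section Aux.
Variables (T : finType) (e : rel T).

Lemma cat_split (s1 s2 p q : seq T) x : s1 ++ s2 = p ++ x :: q ->
  (exists q1, s1 = p ++ x :: q1 /\ q = q1 ++ s2) \/
  (exists p2, s2 = p2 ++ x :: q /\ p = s1 ++ p2).
Proof.
elim: s1 p => [|y s1 IH] p /=.
  by move=> ->; right; exists p.
case: p => [|z p] /= [<-].
  by move=> <-; left; exists s1.
move=> /IH [[q1 [-> ->]]|[p2 [-> ->]]].
  by left; exists q1.
by right; exists p2.
Qed.

Lemma move_pair (a b c : seq T) u u' :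
  cnbh e u = cnbh e u' -> is_DNS e (a ++ u :: b ++ u' :: c) ->
  is_DNS e (a ++ b ++ u :: u' :: c).
Proof.
move=> Hc [Hu HD].
have Hp : perm_eq (a ++ u :: b ++ u' :: c) (a ++ b ++ u :: u' :: c).
  by rewrite perm_cat2l -cat1s perm_catCA.
split; first by rewrite -(perm_uniq Hp).
move=> p q x /cat_split [[q1 [Ha _]]|[p2 [Hb ->]]].
  apply: (HD p (q1 ++ u :: b ++ u' :: c)).
  by rewrite Ha -catA.
move: Hb => /cat_split [[q1 [Hb _]]|[p3 [Hb ->]]].
  have [|w [Hw Hcw]] := HD (a ++ u :: p2) (q1 ++ u' :: c) x; first by rewrite Hb -!catA.
  exists w; split => //; apply: leq_trans Hcw.
  by rewrite /cover_count !count_cat /=; lia.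
case: p3 Hb => [|y [|y' p4]] /= [<-].
- move=> _.
  have [|w [Hw Hcw]] := HD (a ++ u :: b) c u' ; first by rewrite -catA.
  exists w; split; first by rewrite Hc.
  apply: leq_trans Hcw.
  by rewrite /cover_count !count_cat /=; lia.
- move=> <- _.
  have [|w [Hw Hcw]] := HD (a ++ u :: b) c u' ; first by rewrite -catA.
  exists w; split => //; apply: leq_trans Hcw.
  by rewrite /cover_count !count_cat /=; lia.
- move=> <- Hc4.
  have [|w [Hw Hcw]] := HD (a ++ u :: b ++ u' :: p4) q x; first by rewrite Hc4 -!catA /= -catA.
  exists w; split => //; apply: leq_trans Hcw.
  by rewrite /cover_count !count_cat /= !count_cat /=; lia.
Qed.

End Aux.

Theorem lemma2 (T : finType) (e : rel T) (e_sym : symmetric e)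
  (e_irr : irreflexive e) (v v' : T) (S : seq T) :
  v != v' -> cnbh e v = cnbh e v' -> is_DNS e S ->
  (forall x, x \in S ->
     (v' \in NS1 e S x -> v \in NS1 e S x) /\
     (v' \in NS2 e S x -> v \in NS2 e S x)) /\
  (v \in S -> v' \in S ->
     exists S' : seq T, [/\ is_DNS e S', S' =i S &
       exists p q : seq T, S' = p ++ v :: v' :: q \/ S' = p ++ v' :: v :: q]).
Proof.
move=> Hne Hc HD.
have Hs : forall x y, (x \in cnbh e y) = (y \in cnbh e x).
  by move=> x y; rewrite !inE eq_sym e_sym.
have Hk : forall u, (v \in cnbh e u) = (v' \in cnbh e u).
  by move=> u; rewrite Hs Hc -Hs.
have Hcc : forall p, cover_count e p v = cover_count e p v'.
  by move=> p; apply: eq_count => u; rewrite Hk.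
split.
  have Hk2 : forall u, ((v == u) || e u v) = ((v' == u) || e u v') by move=> u; have := Hk u; rewrite !inE.
  by move=> x _; split; rewrite /NS1 /NS2 !inE Hk2 Hcc.
move=> Hv Hv'.
have Hperm : forall (a b c : seq T) (u u' : T), perm_eq (a ++ u :: b ++ u' :: c) (a ++ b ++ u :: u' :: c).
  by move=> a b c u u'; rewrite perm_cat2l -cat1s perm_catCA.
case/splitPr: Hv HD Hv' => p1 p2 HD.
rewrite mem_cat in_cons [v' == v]eq_sym (negbTE Hne) /=.
case/orP => H.
- case/splitPr: H HD => a b HD.
  exists (a ++ b ++ v' :: v :: p2); split.
  + apply: move_pair; first by rewrite Hc.
    by rewrite -catA in HD.
  + apply: perm_mem; rewrite perm_sym -catA; exact: Hperm.
  + by exists (a ++ b), p2; right; rewrite catA.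
- case/splitPr: H HD => b c HD.
  exists (p1 ++ b ++ v :: v' :: c); split.
  + exact: move_pair.
  + apply: perm_mem; rewrite perm_sym; exact: Hperm.
  + by exists (p1 ++ b), c; left; rewrite catA.
Qed.
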